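(* Let $W(x_1,\dots,x_n)$ be an invertible, non-degenerate, quasi-homogeneous polynomial with $2\sum_jw_j=d$ and $W^\star$ its transpose. For every group $G$ with $J_W^2\in G\subseteq\operatorname{SL}_W$ we have $J_{W^\star}^2\in G^\star\subseteq\operatorname{SL}_{W^\star}$. Furthermore $(G^\star)^\star=G$, $\langle J_W^2\rangle^\star=\operatorname{SL}_{W^\star}$, $(\operatorname{SL}_W)^\star=\langle J_{W^\star}^2\rangle$, and if $H_1\subseteq H_2$ are groups with $J_W^2\in H_i\subseteq\operatorname{SL}_W$, then $H_2^\star\subseteq H_1^\star$.
   Context: Invertible: $W=\sum_i\prod_jx_j^{m_{i,j}}$ with invertible exponent matrix $M$, inverse $(m^{i,j})$; quasi-homogeneous of weights $w_j$ and degree $d$; non-degenerate: only critical point $0$. $W^\star=\sum_i\prod_jx_j^{m_{j,i}}$. $\operatorname{Aut}_W$ is the finite group of diagonal symmetries of $W$, $\operatorname{SL}_W=\operatorname{Aut}_W\cap\operatorname{SL}(n;\mathbb C)$, $J_W=(e^{2\pi iw_1/d},\dots,e^{2\pi iw_n/d})$ (similarly for $W^\star$); $\langle h\rangle$ is the group generated by $h$, and $G[J_W]$ the group generated by $G$ and $J_W$. With $\bar\rho_k=(e^{2\pi im^{k,1}},\dots,e^{2\pi im^{k,n}})\in\operatorname{Aut}_{W^\star}$, the Berglund--Hübsch dual of $H\subseteq\operatorname{Aut}_W$ is $H^{\mathrm T}=\{\prod_k\bar\rho_k^{r_k}:\prod_kx_k^{r_k}\text{ is }H\text{-invariant}\}$,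 i.e. the kernel of the Cartier dual $\operatorname{Aut}_{W^\star}=\widehat{\operatorname{Aut}_W}\to\widehat H$ of the inclusion. For $J_W^2\in G\subseteq\operatorname{SL}_W$ set $G^\star:=(G[J_W])^{\mathrm T}$; symmetrically for groups of $W^\star$, with $(W^\star)^\star=W$. *)

(* Defs.v *)
From HB Require Import structures.
From mathcomp Require Import all_boot all_order all_algebra all_field.
From mathcomp Require Import mpoly.
Set Implicit Arguments. Unset Strict Implicit. Unset Printing Implicit Defensive.
Import Order.TTheory GRing.Theory Num.Theory.
Local Open Scope ring_scope.

Section BH.
Variable n : nat.

(* diagonal matrices diag(g_1,...,g_n) are represented by their diagonal *)
Definition dvec := {ffun 'I_n -> algC}.
Definition dset := dvec -> Prop.

Definition one_v : dvec := [ffun => 1].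
Definition mul_v (g h : dvec) : dvec := [ffun j => g j * h j].
Definition inv_v (g : dvec) : dvec := [ffun j => (g j)^-1].
Definition exp_v (g : dvec) (k : nat) : dvec := [ffun j => g j ^+ k].

Definition subset_v (A B : dset) := forall x, A x -> B x.
Definition eqset_v (A B : dset) := forall x, A x <-> B x.

Definition is_group (G : dset) : Prop :=
  [/\ G one_v,
      (forall g h, G g -> G h -> G (mul_v g h)),
      (forall g, G g -> G (inv_v g)) &
      (forall g, G g -> forall j, g j != 0)].

Definition gen_by (S : dset) : dset :=
  fun x => forall K, is_group K -> subset_v S K -> K x.

(* e^{2 pi i q} for q rational: (b.-root (-1)) = e^{i pi / b} *)
Definition expi (q : rat) : algC :=
  ((absz (denq q)).-root (-1)) ^ (2 * numq q).

(* the invertible polynomial with exponent matrix M : W = sum_i prod_j x_j^{m_ij} *)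
Definition Wpoly (M : 'M[nat]_n) : {mpoly algC[n]} :=
  \sum_(i < n) \prod_(j < n) 'X_j ^+ (M i j).

Definition Mrat (M : 'M[nat]_n) : 'M[rat]_n := map_mx (fun m : nat => m%:R) M.

Definition invertible_exp (M : 'M[nat]_n) : Prop := Mrat M \in unitmx.

(* quasi-homogeneous of weights w and degree d: W(t^w x) = t^d W(x),
   i.e. each monomial has weighted degree d *)
Definition quasi_hom (M : 'M[nat]_n) (w : 'I_n -> nat) (d : nat) : Prop :=
  (0 < d)%N /\ (forall j, 0 < w j)%N /\
  forall i, (\sum_(j < n) M i j * w j)%N = d.

Definition non_degenerate (M : 'M[nat]_n) : Prop :=
  forall x : 'I_n -> algC,
    (forall j, (mderiv j (Wpoly M)).@[x] = 0) -> forall j, x j = 0.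

(* Aut_W : diagonal symmetries, W(g x) = W(x) *)
Definition Aut (M : 'M[nat]_n) : dset :=
  fun g => forall i, \prod_(j < n) g j ^+ (M i j) = 1.

Definition SL (M : 'M[nat]_n) : dset :=
  fun g => Aut M g /\ \prod_(j < n) g j = 1.

Definition J (w : 'I_n -> nat) (d : nat) : dvec :=
  [ffun j => expi ((w j)%:R / d%:R)].

Definition rho (M : 'M[nat]_n) (k : 'I_n) : dvec :=
  [ffun j => expi (invmx (Mrat M) k j)].

(* Berglund--Huebsch dual H^T (a group of W^*, exponent matrix M^T) *)
Definition BHdual (M : 'M[nat]_n) (H : dset) : dset :=
  fun g => exists r : 'I_n -> nat,
    (forall h, H h -> \prod_(k < n) h k ^+ r k = 1) /\
    g = [ffun j => \prod_(k < n) rho M k j ^+ r k].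

Definition star (M : 'M[nat]_n) (w : 'I_n -> nat) (d : nat) (G : dset) : dset :=
  BHdual M (gen_by (fun x => G x \/ x = J w d)).

Definition admissible (M : 'M[nat]_n) (w : 'I_n -> nat) (d : nat) (G : dset) :=
  [/\ is_group G, subset_v G (SL M) & G (exp_v (J w d) 2)].

End BH.

(* Main.v *)
Require Import Defs.
From HB Require Import structures.
From mathcomp Require Import all_boot all_order all_algebra all_field.
From mathcomp Require all_fingroup all_character.
From mathcomp Require Import mpoly.
From mathcomp Require Import lra zify ring.
From Stdlib Require Import Classical ClassicalEpsilon FunctionalExtensionality.
Set Implicit Arguments. Unset Strict Implicit. Unset Printing Implicit Defensive.
Import Order.TTheory GRing.Theory Num.Theory.
Local Open Scope ring_scope.

Lemma L2r (R : realFieldType) (a b p q : R) : a ^+ 2 + b ^+ 2 = 1 -> p ^+ 2 + q ^+ 2 = 1 ->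
  0 < b -> 0 < q -> a * q + b * p < 0 -> p < b * q - a * p.
Proof.
move=> h1 h2 hb hq h.
have ha : -1 <= a by nra.
have ha' : a <= 1 by nra.
have [hp|hp] := lerP p 0; first nra.
have ha0 : a < 0 by nra.
have k : p * b ^+ 2 < b * q * (1 - a) by nra.
have k2 : p * (1 - a ^+ 2) < b * q * (1 - a) by nra.
nra.
Qed.
Lemma L3r (R : realFieldType) (a b p q : R) : a ^+ 2 + b ^+ 2 = 1 -> p ^+ 2 + q ^+ 2 = 1 ->
  b < 0 -> 0 < q -> 0 < a * q + b * p -> p < a * p - b * q.
Proof.
move=> h1 h2 hb hq h.
have ha : -1 <= a by nra.
have ha' : a <= 1 by nra.
have [hp|hp] := lerP p 0; first nra.
have ha0 : 0 < a by nra.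
have k : p * b ^+ 2 < - b * q * (1 + a) by nra.
have k2 : p * (1 - a ^+ 2) < - b * q * (1 + a) by nra.
nra.
Qed.
Lemma L1r (R : realFieldType) (a b p q : R) : a ^+ 2 + b ^+ 2 = 1 -> p ^+ 2 + q ^+ 2 = 1 ->
  0 < b -> 0 < q -> 0 <= a * q + b * p -> a * p - b * q <= p.
Proof.
move=> h1 h2 hb hq h.
have ha : -1 <= a by nra.
have ha' : a <= 1 by nra.
have [hp|hp] := lerP 0 p; first nra.
have ha0 : 0 <= a by nra.
have k : - p * b ^+ 2 <= b * q * (1 + a) by nra.
have k2 : - p * (1 - a ^+ 2) <= b * q * (1 + a) by nra.
nra.
Qed.

Lemma ltR (x y : algR) : (x < y) = (algRval x < algRval y).
Proof. by []. Qed.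
Lemma leR (x y : algR) : (x <= y) = (algRval x <= algRval y).
Proof. by []. Qed.

Definition rR (z : algC) : algR := in_algR (Creal_Re z).
Definition rI (z : algC) : algR := in_algR (Creal_Im z).

Lemma unit_ReIm (z : algC) : `|z| = 1 -> rR z ^+ 2 + rI z ^+ 2 = 1.
Proof.
move=> hz; apply: val_inj; rewrite [val 1]/=; change (algRval (rR z ^+ 2 + rI z ^+ 2) = 1).
by rewrite rmorphD !rmorphXn /= -normC2_Re_Im hz expr1n.
Qed.

Lemma UL2 (u e : algC) : `|u| = 1 -> `|e| = 1 -> 0 < 'Im u -> 0 < 'Im e ->
  'Im (u * e) < 0 -> 'Re e < 'Re (- (u * e)).
Proof.
move=> hu he h1 h2 h3.
have := @L2r algR (rR u) (rI u) (rR e) (rI e) (unit_ReIm hu) (unit_ReIm he) h1 h2.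
rewrite raddfN /= ReM.
suff H : rR u * rI e + rI u * rR e < 0.
  by move=> /(_ H); rewrite ltR !rmorphB !rmorphM /= opprB.
by rewrite ltR rmorphD !rmorphM /= ?rmorph0 [_ * 'Re e]mulrC -ImM.
Qed.

Lemma UL3 (v e : algC) : `|v| = 1 -> `|e| = 1 -> 'Im v < 0 -> 0 < 'Im e ->
  0 < 'Im (v * e) -> 'Re e < 'Re (v * e).
Proof.
move=> hu he h1 h2 h3.
have := @L3r algR (rR v) (rI v) (rR e) (rI e) (unit_ReIm hu) (unit_ReIm he) h1 h2.
rewrite ReM.
suff H : 0 < rR v * rI e + rI v * rR e.
  by move=> /(_ H); rewrite ltR !rmorphB !rmorphM /=.
by rewrite ltR rmorphD !rmorphM /= ?rmorph0 [_ * 'Re e]mulrC -ImM.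
Qed.

Lemma UL1 (u v : algC) : `|u| = 1 -> `|v| = 1 -> 0 < 'Im u -> 0 < 'Im v ->
  0 <= 'Im (u * v) -> 'Re (u * v) <= 'Re v.
Proof.
move=> hu he h1 h2 h3.
have := @L1r algR (rR u) (rI u) (rR v) (rI v) (unit_ReIm hu) (unit_ReIm he) h1 h2.
rewrite ReM.
suff H : 0 <= rR u * rI v + rI u * rR v.
  by move=> /(_ H); rewrite leR !rmorphB !rmorphM /=.
by rewrite leR rmorphD !rmorphM /= ?rmorph0 [_ * 'Re v]mulrC -ImM.
Qed.

Lemma Im1 : 'Im (1 : algC) = 0.
Proof. by apply/Creal_ImP; rewrite rpred1. Qed.
Lemma ImN1 : 'Im (-1 : algC) = 0.
Proof. by apply/Creal_ImP; rewrite rpredN rpred1. Qed.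
Lemma ImN (z : algC) : 'Im (- z) = - 'Im z.
Proof. exact: raddfN. Qed.
Lemma ReN (z : algC) : 'Re (- z) = - 'Re z.
Proof. exact: raddfN. Qed.

Lemma unitX (z : algC) k : `|z| = 1 -> `|z ^+ k| = 1.
Proof. by move=> h; rewrite normrX h expr1n. Qed.

Lemma unit_root (z : algC) m : (0 < m)%N -> z ^+ m = 1 -> `|z| = 1.
Proof.
move=> m0 h; apply/eqP; rewrite -(pexpr_eq1 m0) ?normr_ge0 //.
by rewrite -normrX h normr1.
Qed.

Lemma unit_real (z : algC) : `|z| = 1 -> 'Im z = 0 -> z = 1 \/ z = -1.
Proof.
move=> hz /Creal_ImP zr.
have : z ^+ 2 == 1 by rewrite -real_normK // hz expr1n.
by rewrite sqrf_eq1 => /orP[/eqP|/eqP]; [left|right].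
Qed.

Lemma unit_eq (u v : algC) : `|u| = 1 -> `|v| = 1 -> 'Re u = 'Re v ->
  0 <= 'Im u -> 0 <= 'Im v -> u = v.
Proof.
move=> hu hv hR iu iv.
have h2 : 'Im u ^+ 2 = 'Im v ^+ 2.
  have := normC2_Re_Im u; have := normC2_Re_Im v; rewrite hu hv hR => ->.
  by move/addrI.
have hI : 'Im u = 'Im v by apply/eqP; rewrite -(eqrXn2 (n:=2)) // h2.
by rewrite [u]Crect [v]Crect hR hI.
Qed.

Lemma unit_inv_Im (z : algC) : `|z| = 1 -> 'Im z^-1 = - 'Im z.
Proof. by move=> h; rewrite invC_norm h expr1n invr1 mul1r Im_conj. Qed.

Lemma unit_Re_gt (z : algC) : `|z| = 1 -> z != -1 -> -1 < 'Re z.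
Proof.
move=> hz nz.
have e := unit_ReIm hz.
have : -1 <= rR z by nra.
rewrite le_eqVlt => /orP[/eqP h|]; last by rewrite ltR rmorphN rmorph1.
have h' : rI z = 0 by nra.
case/negP: nz; apply/eqP; rewrite [z]Crect.
have -> : 'Re z = -1 by rewrite -[RHS]/(algRval (-1)) h.
have -> : 'Im z = 0 by rewrite -[RHS]/(algRval 0) -h'.
by rewrite mulr0 addr0.
Qed.

Lemma exists_maxRe (s : seq algC) : s != [::] ->
  exists2 x, x \in s & forall y, y \in s -> 'Re y <= 'Re x.
Proof.
elim: s => // a [|b s] IH _.
  by exists a; rewrite ?mem_seq1 // => y; rewrite mem_seq1 => /eqP->.
have [x xs xm] := IH isT.
have /orP[ax|xa] := real_leVge (Creal_Re a) (Creal_Re x).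
  exists x; first by rewrite inE xs orbT.
  by move=> y; rewrite inE => /orP[/eqP->//|/xm].
exists a; first by rewrite mem_head.
move=> y; rewrite inE => /orP[/eqP->//|/xm yx]; exact: le_trans yx xa.
Qed.

Lemma negX2 (x : algC) N : (- x) ^+ (2 * N) = x ^+ (2 * N).
Proof. by rewrite exprNn exprM sqrrN expr1n expr1n mul1r. Qed.

Definition om N : algC := N.-root (-1).

Lemma omX N : (0 < N)%N -> om N ^+ N = -1.
Proof. by move=> N0; rewrite /om rootCK. Qed.

Lemma omX2 N : (0 < N)%N -> om N ^+ (2 * N) = 1.
Proof. by move=> N0; rewrite mulnC exprM omX // sqrrN expr1n. Qed.

Lemma om_norm N : (0 < N)%N -> `|om N| = 1.
Proof. move=> N0; apply: (@unit_root _ (2 * N)); [lia | exact: omX2]. Qed.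

Lemma neqN11 : (-1 : algC) != 1.
Proof. by rewrite eq_sym -addr_eq0 (_ : 1 + 1 = 2%:R) // pnatr_eq0. Qed.

Lemma om_neq1 N : (0 < N)%N -> om N != 1.
Proof.
move=> N0; apply/eqP => h; have := omX N0; rewrite h expr1n => /eqP.
by rewrite eq_sym (negbTE neqN11).
Qed.

Lemma real_pos_of (x : algC) : x \is Num.real -> x != 0 -> ~ (0 < x) -> x < 0.
Proof.
move=> xr x0 h; move: x0; rewrite real_neqr_lt ?rpred0 // => /orP[//|h'].
by case: h.
Qed.

Lemma lt_le_F (x y : algC) : x < y -> y <= x -> False.
Proof. by move=> h1 h2; have := lt_le_trans h1 h2; rewrite ltxx. Qed.

Lemma E_star N : (0 < N)%N -> forall k, (0 < k < N)%N -> 0 < 'Im (om N ^+ k).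
Proof.
move=> N0 k /andP[k0 kN].
have N1 : (1 < N)%N by lia.
have N20 : (0 < 2 * N)%N by lia.
have [eps peps] := C_prim_root_exists N20.
pose P (z : algC) := [&& z ^+ (2 * N) == 1, z != 1 & 0 <= 'Im z].
pose s := [seq z <- [seq eps ^+ i | i <- iota 0 (2 * N)] | P z].
have memP z : P z -> z \in s.
  move=> Pz; rewrite mem_filter Pz /=.
  have /andP[/eqP z1 _] := Pz.
  have [i ->] := prim_rootP peps z1.
  by apply: map_f; rewrite mem_iota /= add0n ltn_ord.
have omP : P (om N).
  by rewrite /P omX2 // eqxx om_neq1 //= Im_rootC_ge0.
have [eta eta_s eta_max] : exists2 e, e \in s & forall z, z \in s -> 'Re z <= 'Re e.
  by apply: exists_maxRe; apply/eqP => s0; have := memP _ omP; rewrite s0.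
have {eta_s} : P eta by move: eta_s; rewrite mem_filter => /andP[].
move=> /and3P[/eqP eta2N eta1 etaI].
have emax z : z ^+ (2 * N) = 1 -> z != 1 -> 0 <= 'Im z -> 'Re z <= 'Re eta.
  by move=> h1 h2 h3; apply: eta_max; apply: memP; rewrite /P h1 eqxx h2 h3.
have eta_n : `|eta| = 1 := unit_root N20 eta2N.
have eps2N : eps ^+ (2 * N) = 1 := prim_expr_order peps.
have eps_n : `|eps| = 1 := unit_root N20 eps2N.
have etaIp : 0 < 'Im eta.
  rewrite lt_def etaI andbT; apply/eqP => I0.
  have [e1|em1] := unit_real eta_n I0; first by rewrite e1 eqxx in eta1.
  have eps1 : eps != 1.
    apply/eqP => e1; have := prim_order_dvd peps 1; rewrite expr1 e1 eqxx.
    move/dvdn_leq => /(_ isT); lia.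
  have epsm1 : eps != -1.
    apply/eqP => e1; have := prim_order_dvd peps 2; rewrite e1 sqrrN expr1n eqxx.
    move/dvdn_leq => /(_ isT); lia.
  have exz : exists z : algC, [/\ z ^+ (2 * N) = 1, z != 1, z != -1, 0 <= 'Im z & `|z| = 1].
    have r0 : (0 : algC) \is Num.real by rewrite real0.
    have /orP[hI|hI] := real_leVge (Creal_Im eps) r0.
      exists eps^-1; split.
      - by rewrite exprVn eps2N invr1.
      - by rewrite invr_eq1.
      - by apply: contra epsm1 => /eqP h; rewrite -[eps]invrK h invrN invr1.
      - by rewrite unit_inv_Im // oppr_ge0.
      - by rewrite normrV ?eps_n ?invr1 // unitfE -normr_eq0 eps_n oner_neq0.
    by exists eps.
  case: exz => z [z2N z1 zm1 zI zn].
  have := emax z z2N z1 zI; rewrite em1 ReN.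
  have -> : 'Re (1 : algC) = 1 by apply/Creal_ReP; rewrite rpred1.
  by move/(lt_le_F (unit_Re_gt zn zm1)).
have exK : exists k, (0 < k)%N && ('Im (eta ^+ k) <= 0).
  by exists (2 * N)%N; rewrite N20 eta2N Im1 lexx.
case: (ex_minnP exK) => K /andP[K0 hK] Kmin.
have pos j : (0 < j < K)%N -> 0 < 'Im (eta ^+ j).
  move=> /andP[j0 jK]; rewrite real_ltNge ?Creal_Im ?real0 //.
  by apply/negP => hj; have := Kmin j; rewrite j0 hj => /(_ isT); lia.
have K2 : (1 < K)%N.
  by case: K K0 hK {Kmin pos} => [|[|K]] // _; rewrite expr1 => /(lt_le_F etaIp).
have etaK : eta ^+ K = eta ^+ K.-1 * eta by rewrite -exprSr prednK.
have uI : 0 < 'Im (eta ^+ K.-1) by apply: pos; lia.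
have un : `|eta ^+ K.-1| = 1 by exact: unitX.
have IK : 'Im (eta ^+ K) = 0.
  apply/eqP; apply: contraT => IK0.
  have IKn : 'Im (eta ^+ K) < 0 by rewrite lt_def eq_sym IK0 hK.
  rewrite etaK in IKn.
  exfalso; apply: (lt_le_F (UL2 un eta_n uI etaIp IKn)); apply: emax.
  - by rewrite negX2 -etaK exprAC eta2N expr1n.
  - apply/eqP => h; have := congr1 (fun z => 'Im z) h; rewrite /= ImN Im1.
    by move/eqP; rewrite oppr_eq0 (lt_eqF IKn).
  - by rewrite ImN oppr_ge0 ltW.
have etaKm1 : eta ^+ K = -1.
  have [h|//] := unit_real (unitX K eta_n) IK.
  have : eta ^+ K.-1 = eta^-1.
    apply: (mulIf (_ : eta != 0)); last by rewrite -etaK h mulVf // -normr_eq0 eta_n oner_neq0.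
    by rewrite -normr_eq0 eta_n oner_neq0.
  move=> e; move: uI; rewrite e unit_inv_Im // oppr_gt0 => h'.
  by have := lt_trans h' etaIp; rewrite ltxx.
have neg j : (0 < j < K)%N -> 'Im (eta ^+ (K + j)) < 0.
  by move=> hj; rewrite exprD etaKm1 mulN1r ImN oppr_lt0; apply: pos.
have ne1 j : (0 < j < 2 * K)%N -> eta ^+ j != 1.
  move=> /andP[j0 jK]; apply/eqP => h.
  have [jlt|jgt|jeq] := ltngtP j K.
  - by have := pos j; rewrite j0 jlt h Im1 ltxx => /(_ isT).
  - have := neg (j - K)%N; rewrite subnKC ?(ltnW jgt) // h Im1 ltxx.
    by move=> H; suff : false by []; apply: H; apply/andP; split; lia.
  - by move: h; rewrite ?jeq etaKm1 => /eqP; rewrite (negbTE neqN11).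
have eta2K : eta ^+ (2 * K) = 1 by rewrite mulnC exprM etaKm1 sqrrN expr1n.
have KN : K = N.
  have [KltN|KgtN|//] := ltngtP K N; last first.
    have hh : (0 < 2 * N < 2 * K)%N by apply/andP; split; lia.
    by have := ne1 _ hh; rewrite eta2N eqxx.
  exfalso.
  pose sj j := 'Im (eta ^+ j * eps).
  have sj0 j : sj j != 0.
    apply/eqP => h.
    have hn : `|eta ^+ j * eps| = 1 by rewrite normrM unitX // eps_n mulr1.
    have h2 : (eta ^+ j * eps) ^+ (2 * K) = 1.
      by have [->|->] := unit_real hn h; rewrite ?expr1n // exprM sqrrN !expr1n.
    move: h2; rewrite exprMn -exprM mulnC exprM eta2K expr1n mul1r => /eqP.
    rewrite -(prim_order_dvd peps) => /dvdn_leq; lia.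
  have sjK j : sj (j + K)%N = - sj j by rewrite /sj exprD etaKm1 mulrN1 mulNr ImN.
  have sjr j : sj j \is Num.real by exact: Creal_Im.
  have [m mK hm] : exists2 m, (m <= K)%N & sj m < 0.
    case: (boolP (0 < sj 0)) => h0.
      by exists K => //; rewrite -(add0n K) sjK oppr_lt0.
    by exists 0%N => //; apply: real_pos_of (sjr 0%N) (sj0 0%N) (negP h0).
  have exJ : exists j, (m < j)%N && (0 < sj j).
    by exists (m + K)%N; rewrite sjK oppr_gt0 hm; apply/andP; split => //; lia.
  case: (ex_minnP exJ) => J /andP[mJ hJ] Jmin.
  have hJ1 : sj J.-1 < 0.
    have [e|mJ1] := eqVneq m J.-1; first by rewrite -e.
    apply: real_pos_of (sjr _) (sj0 _) _ => h.
    have := Jmin J.-1; rewrite h andbT.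
    have -> : (m < J.-1)%N by rewrite ltn_neqAle mJ1 /=; lia.
    by move/(_ isT); lia.
  have vn : `|eta ^+ J.-1 * eps| = 1 by rewrite normrM unitX // eps_n mulr1.
  have eJ : eta ^+ J.-1 * eps * eta = eta ^+ J * eps.
    by rewrite -mulrA [eps * _]mulrC mulrA -exprSr prednK //; lia.
  have hJ' : 0 < 'Im (eta ^+ J.-1 * eps * eta) by rewrite eJ.
  apply: (lt_le_F (UL3 vn eta_n hJ1 etaIp hJ')); rewrite eJ; apply: emax.
  - by rewrite exprMn eps2N mulr1 exprAC eta2N expr1n.
  - apply/eqP => h; move: hJ; rewrite /sj h Im1 ltxx //.
  - exact: ltW.
subst K.
have etaN : eta ^+ N = -1 by [].
have h1 := rootC_Re_max N0 etaN etaI.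
have h2 := emax (om N) (omX2 N0) (om_neq1 N0) (Im_rootC_ge0 _ N1).
have -> : om N = eta.
  apply: unit_eq => //; [exact: om_norm| apply: le_anti; rewrite h2 h1 // | exact: Im_rootC_ge0].
by apply: pos; rewrite k0 kN.
Qed.

Lemma halfturn_prim (z : algC) K : (0 < K)%N -> z ^+ K = -1 ->
  (forall k, (0 < k < K)%N -> 0 < 'Im (z ^+ k)) -> (2 * K).-primitive_root z.
Proof.
move=> K0 zK pos.
have z2K : z ^+ (2 * K) = 1 by rewrite mulnC exprM zK sqrrN expr1n.
have ne1 j : (0 < j < 2 * K)%N -> z ^+ j != 1.
  move=> /andP[j0 jK]; apply/eqP => h.
  have [jlt|jgt|jeq] := ltngtP j K.
  - by have := pos j; rewrite j0 jlt h Im1 ltxx => /(_ isT).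
  - have h2 : (0 < j - K < K)%N by apply/andP; split; lia.
    have := pos _ h2.
    have e : z ^+ (j - K) = -1.
      by move: h; rewrite -(subnKC (ltnW jgt)) exprD zK mulN1r addKn => /eqP; rewrite eqr_oppLR => /eqP.
    by rewrite e ImN1 ltxx.
  - by move: h; rewrite ?jeq zK => /eqP; rewrite (negbTE neqN11).
have K20 : (0 < 2 * K)%N by lia.
have [m pm mdvd] := prim_order_exists K20 z2K.
have m0 : (0 < m)%N := prim_order_gt0 pm.
have mle : (m <= 2 * K)%N by apply: dvdn_leq => //; lia.
have [mlt|meq] : (m < 2 * K)%N \/ m = (2 * K)%N by lia.
  by have := ne1 m; rewrite m0 mlt prim_expr_order // eqxx => /(_ isT).
by rewrite -meq.
Qed.

Lemma om_prim N : (0 < N)%N -> (2 * N).-primitive_root (om N).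
Proof. by move=> N0; apply: halfturn_prim => //; [exact: omX | exact: E_star]. Qed.

Lemma om_neq0 N : (0 < N)%N -> om N != 0.
Proof. by move=> N0; rewrite -normr_eq0 om_norm // oner_neq0. Qed.

Lemma om_pow b c : (0 < b)%N -> (0 < c)%N -> om (b * c) ^+ c = om b.
Proof.
move=> b0 c0; set y := om (b * c) ^+ c.
have bc0 : (0 < b * c)%N by rewrite muln_gt0 b0.
have yb : y ^+ b = -1 by rewrite /y -exprM (mulnC c b) omX.
have [b1|b1] : b = 1%N \/ (1 < b)%N by lia.
  by rewrite b1 /om root1C -(expr1 y) -{1}b1 yb.
have yn : `|y| = 1 by apply: unitX; exact: om_norm.
have ypos k : (0 < k < b)%N -> 0 < 'Im (y ^+ k).
  move=> /andP[k0 kb]; rewrite /y -exprM; apply: E_star => //.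
  by apply/andP; split; nia.
have py := halfturn_prim b0 yb ypos.
have [i oi] := prim_rootP py (omX2 b0).
have oI : 0 <= 'Im (om b) := Im_rootC_ge0 _ b1.
have i0 : (0 < i)%N.
  rewrite lt0n; apply/negP => /eqP i0; move: oi; rewrite i0 expr0 => /eqP.
  by rewrite (negbTE (om_neq1 b0)).
have ib : (i <= b)%N.
  rewrite leqNgt; apply/negP => bi.
  have h2 : (0 < i - b < b)%N by have := ltn_ord i; move=> ?; apply/andP; split; lia.
  move: oI; rewrite oi -(subnKC (ltnW bi)) exprD yb mulN1r ImN oppr_ge0.
  by move=> h; apply: (lt_le_F (ypos _ h2) h).
have dec j : (0 < j <= b)%N -> 'Re (y ^+ j) <= 'Re y.
  elim: j => // [[|j]] IH /andP[_ jb]; first by rewrite expr1.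
  rewrite exprSr; apply: UL1 => //.
  - exact: unitX.
  - by apply: ypos; apply/andP; split; lia.
  - by rewrite -(expr1 y); apply: ypos; apply/andP; split; lia.
  - rewrite -exprSr; have [jb'|jb'] : (j.+2 < b)%N \/ j.+2 = b by lia.
      by apply: ltW; apply: ypos; rewrite jb'.
    by rewrite jb' yb ImN1.
have h1 : 'Re (om b) <= 'Re y by rewrite oi; apply: dec; rewrite i0 ib.
have y0 : 0 <= 'Im y by apply: ltW; rewrite -(expr1 y); apply: ypos; rewrite b1.
have h2 := rootC_Re_max b0 yb y0.
apply: unit_eq => //; first exact: om_norm.
by apply: le_anti; rewrite h2 h1.
Qed.

Lemma expi_om q : expi q = om `|denq q| ^ (2 * numq q).
Proof. by []. Qed.

Lemma denq_abs q : (`|denq q|%N)%:Z = denq q.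
Proof. by rewrite gtz0_abs ?denq_gt0. Qed.

Lemma denq_absn_gt0 q : (0 < `|denq q|)%N.
Proof. by rewrite absz_gt0 denq_neq0. Qed.

Lemma om_z_exp N (m : nat) (x : int) : (0 < N)%N ->
  (om N ^+ m) ^ x = om N ^ (m%:Z * x).
Proof. by move=> N0; rewrite -exprz_exp. Qed.

Lemma expiE (x : int) (m : nat) : (0 < m)%N -> expi (x%:~R / m%:R) = om m ^ (2 * x).
Proof.
move=> m0; set q := x%:~R / m%:R; rewrite expi_om.
set D := `|denq q|%N.
have D0 : (0 < D)%N := denq_absn_gt0 q.
have key : numq q * m%:Z = x * D%:Z.
  have H : (numq q * m%:Z)%:~R = (x * D%:Z)%:~R :> rat.
    rewrite !intrM denq_abs numqE /q.
    have hm : (m%:R : rat) != 0 by rewrite pnatr_eq0 -lt0n.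
    by rewrite mulrAC -[(m%:Z)%:~R]/(m%:R : rat) divfK.
  by move/eqP: H; rewrite eqr_int => /eqP.
have DM0 : (0 < D * m)%N by rewrite muln_gt0 D0 m0.
have MD0 : (0 < m * D)%N by rewrite muln_gt0 D0 m0.
rewrite -(om_pow m0 D0) (om_z_exp _ _ MD0).
rewrite -(om_pow D0 m0) (om_z_exp _ _ DM0) (mulnC D m).
congr (_ ^ _); rewrite mulrCA [RHS]mulrCA; congr (_ * _).
by rewrite [LHS]mulrC key mulrC.
Qed.

Lemma expi_frac (q : rat) (x : int) (m : nat) : (0 < m)%N -> q * m%:R = x%:~R ->
  expi q = om m ^ (2 * x).
Proof.
move=> m0 h; rewrite -expiE //; congr expi.
by rewrite -h mulfK // pnatr_eq0 -lt0n.
Qed.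

Lemma numq_mul q k : q * (`|denq q| * k)%:R = (numq q * k%:Z)%:~R.
Proof.
rewrite natrM mulrA intrM; congr (_ * _).
by rewrite numqE -denq_abs.
Qed.

Lemma expi_int (z : int) : expi z%:~R = 1.
Proof.
rewrite (@expi_frac _ z 1) // ?mulr1 //.
by rewrite /om root1C -exprz_exp -exprnP sqrrN expr1n exp1rz.
Qed.

Lemma expi0 : expi 0 = 1.
Proof. by rewrite -(expi_int 0). Qed.

Lemma expi_neq0 q : expi q != 0.
Proof. by rewrite expi_om expfz_neq0 // om_neq0 // denq_absn_gt0. Qed.

Lemma expiD a b : expi (a + b) = expi a * expi b.
Proof.
set da := `|denq a|%N; set db := `|denq b|%N.
have da0 : (0 < da)%N := denq_absn_gt0 a.
have db0 : (0 < db)%N := denq_absn_gt0 b.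
have m0 : (0 < da * db)%N by rewrite muln_gt0 da0.
have ha := numq_mul a db.
have hb : b * (da * db)%:R = (numq b * da%:Z)%:~R by rewrite mulnC numq_mul.
rewrite (expi_frac m0 ha) (expi_frac m0 hb) (@expi_frac _ (numq a * db%:Z + numq b * da%:Z) _ m0).
  by rewrite mulrDr expfzDr // om_neq0.
by rewrite mulrDl ha hb intrD.
Qed.

Lemma expiMn q k : expi q ^+ k = expi (q *+ k).
Proof.
elim: k => [|k IH]; first by rewrite expr0 mulr0n expi0.
by rewrite exprS IH mulrS expiD.
Qed.

Lemma expiN q : expi (- q) = (expi q)^-1.
Proof.
apply: (mulfI (expi_neq0 q)); rewrite -expiD subrr expi0 mulfV //.
exact: expi_neq0.
Qed.

Lemma expiB a b : expi (a - b) = expi a / expi b.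
Proof. by rewrite expiD expiN. Qed.

Lemma expi_shift q (z : int) : expi (q + z%:~R) = expi q.
Proof. by rewrite expiD expi_int mulr1. Qed.

Lemma prim_z n (z : algC) (e : int) : n.-primitive_root z -> z ^ e = 1 -> (n%:Z %| e)%Z.
Proof.
move=> pz; case: e => k.
  by rewrite -exprnP => /eqP; rewrite -(prim_order_dvd pz) dvdzE.
rewrite NegzE -exprnN => /eqP; rewrite invr_eq1 => /eqP h.
by move/eqP: h; rewrite -(prim_order_dvd pz) dvdzE abszN.
Qed.

Lemma expi_eq1 q : expi q = 1 -> exists z : int, q = z%:~R.
Proof.
set D := `|denq q|%N; have D0 : (0 < D)%N := denq_absn_gt0 q.
rewrite expi_om -/D => h.
have := prim_z (om_prim D0) h.
rewrite PoszM dvdz_mul2l // => /divzK e.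
exists (numq q %/ D%:Z)%Z.
apply: (mulIf (_ : (D%:Z)%:~R != 0 :> rat)); first by rewrite intr_eq0 -lt0n D0.
by rewrite -intrM e denq_abs numqE.
Qed.

Lemma expi_root (z : algC) N : (0 < N)%N -> z ^+ N = 1 ->
  exists k : nat, z = expi (k%:R / N%:R).
Proof.
move=> N0 zN.
have z2 : z ^+ (2 * N) = 1 by rewrite mulnC exprM zN expr1n.
have [[i /= _] zi] := prim_rootP (om_prim N0) z2.
have : (2 * N %| i * N)%N.
  by rewrite (prim_order_dvd (om_prim N0)) exprM -zi zN.
rewrite dvdn_pmul2r // => /divnK ei.
exists (i %/ 2)%N.
rewrite -[(i %/ 2)%:R]/(((i %/ 2)%N%:Z)%:~R : rat) expiE //.
by rewrite zi -PoszM -exprnP mulnC ei.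
Qed.

Module SepM.
Import all_fingroup all_character.
Import Order.TTheory GRing.Theory Num.Theory.
Local Open Scope ring_scope.

Definition pbool (P : Prop) : bool :=
  if excluded_middle_informative P then true else false.

Lemma pboolP (P : Prop) : reflect P (pbool P).
Proof. by rewrite /pbool; case: excluded_middle_informative => h; constructor. Qed.

Lemma Sep n N' (H : dset n) : is_group H ->
  (forall g, H g -> forall j, g j ^+ N'.+2 = 1) ->
  forall h : dvec n, (forall j, h j ^+ N'.+2 = 1) -> ~ H h ->
  exists r : 'I_n -> nat,
    (forall g, H g -> \prod_k g k ^+ r k = 1) /\ \prod_k h k ^+ r k != 1.
Proof.
set N := N'.+2 => -[H1 HM HV Hnz] HN h hN nH.
have [z pz] := C_prim_root_exists (isT : (0 < N)%N).
pose T := 'rV['Z_N]_n.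
pose psi (a : T) : dvec n := [ffun j => z ^+ (a 0 j : nat)].
have psiM a b : psi (a + b) = mul_v (psi a) (psi b).
  apply/ffunP => j; rewrite !ffunE mxE /= -exprD.
  by rewrite (expr_mod _ (prim_expr_order pz)).
have psi0 : psi 0 = one_v n by apply/ffunP => j; rewrite !ffunE mxE expr0.
have preim (g : dvec n) : (forall j, g j ^+ N = 1) -> exists a : T, psi a = g.
  move=> hg; exists (\row_j (sval (prim_rootP pz (hg j)) : 'Z_N)).
  apply/ffunP => j; rewrite ffunE mxE.
  by case: (prim_rootP pz (hg j)) => i /= ->.
pose Hs := [set a : T | pbool (H (psi a))].
have gHs : group_set Hs.
  apply/group_setP; split; first by rewrite inE FinRing.zmod1gE psi0; apply/pboolP.
  move=> x y; rewrite !inE => /pboolP hx /pboolP hy; apply/pboolP.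
  by rewrite FinRing.zmodMgE psiM; apply: HM.
pose HG := Group gHs.
have nHG : (HG <| [set: T])%g.
  by rewrite -sub_abelian_normal ?subsetT // FinRing.zmod_abelian.
have [a0 pa0] := preim h hN.
have a0H : a0 \notin HG by rewrite inE; apply/pboolP; rewrite pa0.
have [i [Hi a0i]] : exists i : Iirr [set: T]%G, (HG \subset cfker 'chi_i) /\ a0 \notin cfker 'chi_i.
  apply: NNPP => hne; case/negP: a0H.
  rewrite -(cap_cfker_normal nHG); apply/bigcapP => i Hi.
  by apply: contraT => ni; exfalso; apply: hne; exists i.
have lchi : 'chi_i \is a linear_char := char_abelianP _ (FinRing.zmod_abelian _) i.
pose e (j : 'I_n) : T := \row_k ((k == j)%:R : 'Z_N).
have ce j : 'chi_i (e j) ^+ N = 1.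
  rewrite -(lin_charX lchi) ?inE //.
  have -> : ((e j) ^+ N)%g = 1%g.
    have N0 : (N%:R : 'Z_N) = 0 by rewrite Zp_nat; apply: val_inj; rewrite /= modnn.
    by rewrite FinRing.zmodXgE FinRing.zmod1gE -scaler_nat N0 scale0r.
  exact: lin_char1.
pose r (j : 'I_n) : nat := sval (prim_rootP pz (ce j)).
have rE j : 'chi_i (e j) = z ^+ r j by rewrite /r; case: (prim_rootP pz (ce j)).
have decomp (a : T) : a = (\prod_j (e j ^+ (a 0 j : nat)))%g.
  rewrite -[RHS]/(\sum_j e j *+ (a 0 j : nat)).
  apply/rowP => k; rewrite summxE (bigD1 k) //= big1 => [|j jk].
    by rewrite mulmxnE !mxE eqxx addr0 natr_Zp.
  by rewrite mulmxnE !mxE eq_sym (negbTE jk) mul0rn.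
have chiE (a : T) : 'chi_i a = \prod_k (psi a) k ^+ r k.
  rewrite {1}(decomp a) (lin_char_prod lchi) => [|k _]; last by rewrite inE.
  apply: eq_bigr => k _; rewrite (lin_charX lchi) ?inE // rE ffunE -!exprM mulnC //.
exists r; split.
  move=> g Hg; have [a pa] := preim g (HN g Hg).
  have aH : a \in HG by rewrite inE; apply/pboolP; rewrite pa.
  have := subsetP Hi a aH; rewrite cfkerEirr inE => /eqP.
  by rewrite chiE pa lin_char1.
apply: contra a0i; rewrite cfkerEirr inE chiE pa0 => /eqP ->.
by rewrite lin_char1.
Qed.

End SepM.
Import SepM.

Definition E n (q : 'I_n -> rat) : dvec n := [ffun j => expi (q j)].
Definition mono n (h : dvec n) (r : 'I_n -> nat) : algC := \prod_k h k ^+ r k.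
Definition Pinv n (P : 'M[nat]_n) : 'M[rat]_n := invmx (Mrat P).
Definition colE n (P : 'M[nat]_n) (t : 'I_n -> nat) : dvec n :=
  E (fun j => \sum_k (t k)%:R * Pinv P j k).
Definition rowE n (P : 'M[nat]_n) (r : 'I_n -> nat) : dvec n :=
  E (fun j => \sum_k (r k)%:R * Pinv P k j).
Definition torus n (g : dvec n) : Prop := forall j, g j != 0.

Lemma expi_sum (I : Type) (s : seq I) (F : I -> rat) :
  expi (\sum_(i <- s) F i) = \prod_(i <- s) expi (F i).
Proof. exact: (big_morph expi expiD expi0). Qed.

Lemma mono_E n (q : 'I_n -> rat) r : mono (E q) r = expi (\sum_k (r k)%:R * q k).
Proof.
rewrite /mono expi_sum; apply: eq_bigr => k _.
by rewrite ffunE expiMn mulr_natl.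
Qed.

Lemma E_mul n (a b : 'I_n -> rat) : mul_v (E a) (E b) = E (fun j => a j + b j).
Proof. by apply/ffunP => j; rewrite !ffunE expiD. Qed.

Lemma E_inv n (a : 'I_n -> rat) : inv_v (E a) = E (fun j => - a j).
Proof. by apply/ffunP => j; rewrite !ffunE expiN. Qed.

Lemma E_exp n (a : 'I_n -> rat) k : exp_v (E a) k = E (fun j => a j *+ k).
Proof. by apply/ffunP => j; rewrite !ffunE expiMn. Qed.

Lemma E_one n : one_v n = E (fun _ => 0).
Proof. by apply/ffunP => j; rewrite !ffunE /= ?expi0. Qed.

Lemma E_torus n (a : 'I_n -> rat) : torus (E a).
Proof. by move=> j; rewrite ffunE expi_neq0. Qed.

Lemma E_eq n (a b : 'I_n -> rat) : (forall j, a j - b j \is a Num.int) -> E a = E b.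
Proof.
move=> h; apply/ffunP => j; rewrite !ffunE.
have [z hz] : exists z : int, a j - b j = z%:~R by apply/intrP.
by rewrite -(subrK (b j) (a j)) expiD hz expi_int mul1r.
Qed.

Lemma E_eqP n (a b : 'I_n -> rat) : E a = E b -> forall j, a j - b j \is a Num.int.
Proof.
move=> h j; have := congr1 (fun g : dvec n => g j) h; rewrite !ffunE => e.
have : expi (a j - b j) = 1 by rewrite expiB e divff // expi_neq0.
by case/expi_eq1 => z ->; rewrite intr_int.
Qed.

Lemma mono_mul n (x y : dvec n) r : mono (mul_v x y) r = mono x r * mono y r.
Proof. by rewrite /mono -big_split; apply: eq_bigr => k _; rewrite ffunE exprMn. Qed.

Lemma mono_inv n (x : dvec n) r : mono (inv_v x) r = (mono x r)^-1.
Proof. by rewrite /mono -prodfV; apply: eq_bigr => k _; rewrite ffunE exprVn. Qed.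

Lemma mono_one n r : mono (one_v n) r = 1.
Proof. by rewrite /mono big1 // => k _; rewrite ffunE expr1n. Qed.

Lemma mono_add n (x : dvec n) r1 r2 : mono x (fun k => (r1 k + r2 k)%N) = mono x r1 * mono x r2.
Proof. by rewrite /mono -big_split; apply: eq_bigr => k _; rewrite exprD. Qed.

Lemma mono_scale n (x : dvec n) r m : mono x (fun k => (r k * m)%N) = mono x r ^+ m.
Proof. by rewrite /mono -prodrXl; apply: eq_bigr => k _; rewrite exprM. Qed.


Lemma Mrat_tr n (P : 'M[nat]_n) : Mrat P^T = (Mrat P)^T.
Proof. by apply/matrixP => i j; rewrite !mxE. Qed.

Lemma Pinv_tr n (P : 'M[nat]_n) : Pinv P^T = (Pinv P)^T.
Proof. by rewrite /Pinv Mrat_tr trmx_inv. Qed.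

Lemma inv_tr n (P : 'M[nat]_n) : invertible_exp P -> invertible_exp P^T.
Proof. by rewrite /invertible_exp Mrat_tr unitmx_tr. Qed.

Lemma PinvL n (P : 'M[nat]_n) : invertible_exp P ->
  forall i j, \sum_k Pinv P i k * (P k j)%:R = (i == j)%:R.
Proof.
move=> hP i j; have e : Pinv P *m Mrat P = 1%:M := mulVmx hP.
have := congr1 (fun A : 'M[rat]_n => A i j) e.
by rewrite !mxE => <-; apply: eq_bigr => k _; rewrite mxE.
Qed.

Lemma PinvR n (P : 'M[nat]_n) : invertible_exp P ->
  forall i j, \sum_k (P i k)%:R * Pinv P k j = (i == j)%:R.
Proof.
move=> hP i j; have e : Mrat P *m Pinv P = 1%:M := mulmxV hP.
have := congr1 (fun A : 'M[rat]_n => A i j) e.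
by rewrite !mxE => <-; apply: eq_bigr => k _; rewrite mxE.
Qed.

Lemma int_mul_den (x : rat) (k : nat) : (`|denq x| %| k)%N -> k%:R * x \is a Num.int.
Proof.
move=> /dvdnP [m ->]; rewrite natrM -mulrA.
have -> : (`|denq x|%N%:R : rat) * x = (numq x)%:~R.
  by rewrite numqE mulrC -denq_abs.
by rewrite rpredM ?natr_int ?intr_int.
Qed.

Lemma dvdn_prod_in (I : finType) (F : I -> nat) i : (F i %| \prod_j F j)%N.
Proof. by rewrite (bigD1 i) //= dvdn_mulr. Qed.

Lemma delta_ex n (A : 'M[rat]_n) : exists2 dl : nat, (0 < dl)%N &
  forall i j, dl%:R * A i j \is a Num.int.
Proof.
exists (\prod_i \prod_j `|denq (A i j)|)%N.
  by rewrite prodn_gt0 // => i; rewrite prodn_gt0 // => j; exact: denq_absn_gt0.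
move=> i j; apply: int_mul_den.
apply: dvdn_trans (dvdn_prod_in _ i).
exact: (dvdn_prod_in (fun j => `|denq (A i j)|%N) j).
Qed.

Lemma expi_int_pow (q : rat) (dl : nat) : dl%:R * q \is a Num.int -> expi q ^+ dl = 1.
Proof.
move=> /intrP [z hz]; by rewrite expiMn -mulr_natl hz expi_int.
Qed.

Lemma Aut_nz n (P : 'M[nat]_n) : invertible_exp P -> forall g, Aut P g -> torus g.
Proof.
move=> hP g hg j; apply/eqP => g0.
have [i Pij] : exists i, P i j != 0%N.
  apply: NNPP => hne; have := PinvL hP j j; rewrite eqxx big1 => [|k _].
    by move/eqP; rewrite eq_sym oner_eq0.
  have -> : P k j = 0%N by apply/eqP; apply: contraT => h; exfalso; apply: hne; exists k.
  by rewrite mulr0.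
have := hg i; rewrite (bigD1 j) //= g0 expr0n (negbTE Pij) mul0r => /eqP.
by rewrite eq_sym oner_eq0.
Qed.

Lemma prod_exprz_sum (x : algC) (I : Type) (s : seq I) (F : I -> int) : x != 0 ->
  x ^ (\sum_(i <- s) F i) = \prod_(i <- s) x ^ F i.
Proof.
move=> x0; elim: s => [|a s IH]; first by rewrite !big_nil expr0z.
by rewrite !big_cons expfzDr // IH.
Qed.

Lemma prod_exprz_base (I : Type) (s : seq I) (F : I -> algC) (e : int) :
  (\prod_(i <- s) F i) ^ e = \prod_(i <- s) F i ^ e.
Proof.
elim: s => [|a s IH]; first by rewrite !big_nil exp1rz.
by rewrite !big_cons expfzMl IH.
Qed.

Lemma Aut_root n (P : 'M[nat]_n) : invertible_exp P ->
  exists2 dl : nat, (0 < dl)%N & forall g, Aut P g -> forall j, g j ^+ dl = 1.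
Proof.
move=> hP; have [dl dl0 hdl] := delta_ex (Pinv P).
exists dl => // g hg k.
have gnz := Aut_nz hP hg.
pose C i := numq (dl%:R * Pinv P k i).
have CE i : (C i)%:~R = dl%:R * Pinv P k i by rewrite /C numqK.
have A j : (dl%:Z * (k == j)%:Z) = \sum_i C i * (P i j)%:Z.
  apply/eqP; rewrite -(eqr_int rat) intrM rmorph_sum /=.
  rewrite -[(dl%:Z)%:~R]/(dl%:R : rat) -[((k == j)%:Z)%:~R]/((k == j)%:R : rat).
  rewrite -(PinvL hP) mulr_sumr; apply/eqP; apply: eq_bigr => i _.
  by rewrite intrM CE mulrA.
have step1 : g k ^+ dl = \prod_j g j ^ (dl%:Z * (k == j)%:Z).
  rewrite (bigD1 k) //= eqxx mulr1 big1 ?mulr1 // => j jk.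
  by rewrite eq_sym (negbTE jk) mulr0 expr0z.
rewrite step1; under eq_bigr => j _ do rewrite A (prod_exprz_sum _ _ (gnz j)).
rewrite exchange_big /= big1 // => i _.
under eq_bigr => j _ do rewrite mulrC -exprz_exp -exprnP.
by rewrite -prod_exprz_base hg exp1rz.
Qed.

Lemma AutE n (P : 'M[nat]_n) : invertible_exp P -> forall g, Aut P g ->
  exists q : 'I_n -> rat, g = E q /\ forall i, \sum_j (P i j)%:R * q j \is a Num.int.
Proof.
move=> hP; have [dl dl0 hdl] := Aut_root hP => g hg.
have : forall j, exists k : nat, g j = expi (k%:R / dl%:R).
  by move=> j; apply: expi_root => //; apply: hdl.
case/fin_all_exists => kk hk.
exists (fun j => (kk j)%:R / dl%:R); split.
  by apply/ffunP => j; rewrite ffunE hk.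
move=> i; have := hg i.
have -> : \prod_j g j ^+ P i j = mono (E (fun j => (kk j)%:R / dl%:R)) (fun j => P i j).
  by rewrite /mono; apply: eq_bigr => j _; rewrite ffunE hk.
by rewrite mono_E => /expi_eq1 [z ->]; rewrite intr_int.
Qed.

Lemma sum_swap n (a b : 'I_n -> rat) (A : 'I_n -> 'I_n -> rat) :
  \sum_j a j * \sum_k b k * A j k = \sum_k b k * \sum_j a j * A j k.
Proof.
under eq_bigr => j _ do rewrite mulr_sumr.
rewrite exchange_big /=; apply: eq_bigr => k _; rewrite mulr_sumr.
by apply: eq_bigr => j _; rewrite mulrCA.
Qed.

Lemma sum_swap2 n (a b : 'I_n -> rat) (A : 'I_n -> 'I_n -> rat) :
  \sum_j a j * \sum_k A j k * b k = \sum_k b k * \sum_j a j * A j k.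
Proof.
rewrite -sum_swap; apply: eq_bigr => j _; congr (_ * _).
by apply: eq_bigr => k _; rewrite mulrC.
Qed.

Lemma inv_apply n (P : 'M[nat]_n) : invertible_exp P -> forall (q : 'I_n -> rat) j,
  \sum_k Pinv P j k * \sum_l (P k l)%:R * q l = q j.
Proof.
move=> hP q j; rewrite sum_swap2.
under eq_bigr => l _ do rewrite PinvL //.
rewrite (bigD1 j) //= big1 ?eqxx ?mulr1 ?addr0 // => l lj.
by rewrite eq_sym (negbTE lj) mulr0.
Qed.

Lemma colE_Aut n (P : 'M[nat]_n) : invertible_exp P -> forall t, Aut P (colE P t).
Proof.
move=> hP t i.
have -> : \prod_j colE P t j ^+ P i j = mono (colE P t) (fun j => P i j) by [].
rewrite /colE mono_E sum_swap.
under eq_bigr => k _ do rewrite PinvR //.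
rewrite (bigD1 i) //= big1 ?eqxx ?mulr1 ?addr0; first by rewrite -[(t i)%:R]/(((t i)%:Z)%:~R : rat) expi_int.
by move=> k ki; rewrite eq_sym (negbTE ki) mulr0.
Qed.

Lemma Aut_colE n (P : 'M[nat]_n) : invertible_exp P -> forall g, Aut P g ->
  exists t, g = colE P t.
Proof.
move=> hP g hg; have [q [-> hq]] := AutE hP hg.
have [dl dl0 hdl] := delta_ex (Pinv P).
have : forall i, exists z : int, \sum_j (P i j)%:R * q j = z%:~R.
  by move=> i; apply/intrP.
case/fin_all_exists => z hz.
pose c := (\sum_i absz (z i))%N.
have zle i : (absz (z i) <= c)%N by rewrite /c (bigD1 i) //= leq_addr.
pose t i := absz (z i + (c * dl)%N%:Z).
have tE i : (t i)%:R = (z i)%:~R + (c * dl)%:R :> rat.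
  rewrite /t -[((absz _))%:R]/(((absz (z i + (c * dl)%N%:Z))%:Z)%:~R : rat).
  rewrite gez0_abs ?intrD //.
  have h2 : ((absz (z i))%:Z <= (c * dl)%N%:Z)%R.
    by rewrite lez_nat; apply: leq_trans (zle i) _; rewrite leq_pmulr.
  lia.
exists t; apply: E_eq => j.
under eq_bigr => k _ do rewrite tE mulrDl.
rewrite big_split /=.
under eq_bigr => k _ do rewrite -hz.
have -> : \sum_k (\sum_j0 (P k j0)%:R * q j0) * Pinv P j k = q j.
  by under eq_bigr => k _ do rewrite mulrC; rewrite inv_apply.
rewrite opprD addrA subrr add0r rpredN rpred_sum // => k _.
by rewrite natrM -mulrA mulrC rpredM ?natr_int // hdl.
Qed.

Lemma rowE_tr n (P : 'M[nat]_n) r : rowE P^T r = colE P r.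
Proof. by rewrite /rowE /colE Pinv_tr; congr E; apply: functional_extensionality => j; apply: eq_bigr => k _; rewrite mxE. Qed.

Lemma colE_tr n (P : 'M[nat]_n) r : colE P^T r = rowE P r.
Proof. by rewrite /rowE /colE Pinv_tr; congr E; apply: functional_extensionality => j; apply: eq_bigr => k _; rewrite mxE. Qed.

Lemma rho_prod n (P : 'M[nat]_n) r :
  [ffun j => \prod_k rho P k j ^+ r k] = rowE P r.
Proof.
apply/ffunP => j; rewrite !ffunE expi_sum; apply: eq_bigr => k _.
by rewrite ffunE expiMn mulr_natl.
Qed.

Lemma BHdualE n (P : 'M[nat]_n) (H : dset n) g :
  BHdual P H g <-> exists r, (forall h, H h -> mono h r = 1) /\ g = rowE P r.
Proof.
split.
  by move=> [r [h1 ->]]; exists r; split => //; rewrite rho_prod.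
by move=> [r [h1 ->]]; exists r; split => //; rewrite rho_prod.
Qed.

Lemma pairing n (P : 'M[nat]_n) t r : mono (colE P t) r = mono (rowE P r) t.
Proof.
by rewrite /colE /rowE !mono_E sum_swap.
Qed.

Lemma colE_root n (P : 'M[nat]_n) : exists2 dl : nat, (0 < dl)%N &
  forall t j, colE P t j ^+ dl = 1 /\ rowE P t j ^+ dl = 1.
Proof.
have [dl dl0 hdl] := delta_ex (Pinv P).
exists dl => // t j; rewrite !ffunE; split; apply: expi_int_pow;
  rewrite mulr_sumr rpred_sum // => k _; by rewrite mulrCA rpredM ?natr_int.
Qed.

Lemma rowE_Aut n (P : 'M[nat]_n) : invertible_exp P -> forall r, Aut P^T (rowE P r).
Proof. by move=> hP r; rewrite -colE_tr; apply: colE_Aut; exact: inv_tr. Qed.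

Lemma Aut_rowE n (P : 'M[nat]_n) : invertible_exp P -> forall g, Aut P^T g ->
  exists r, g = rowE P r.
Proof.
move=> hP g hg; have [r ->] := Aut_colE (inv_tr hP) hg.
by exists r; rewrite colE_tr.
Qed.

Lemma rowE_mul n (P : 'M[nat]_n) r1 r2 :
  mul_v (rowE P r1) (rowE P r2) = rowE P (fun k => (r1 k + r2 k)%N).
Proof.
rewrite /rowE E_mul; congr E; apply: functional_extensionality => j; rewrite -big_split /=.
by apply: eq_bigr => k _; rewrite natrD mulrDl.
Qed.

Lemma colE_mul n (P : 'M[nat]_n) r1 r2 :
  mul_v (colE P r1) (colE P r2) = colE P (fun k => (r1 k + r2 k)%N).
Proof. by rewrite -!rowE_tr rowE_mul. Qed.

Lemma rowE_exp n (P : 'M[nat]_n) r m :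
  exp_v (rowE P r) m = rowE P (fun k => (r k * m)%N).
Proof.
rewrite /rowE E_exp; congr E; apply: functional_extensionality => j; rewrite -mulr_natr mulr_suml.
by apply: eq_bigr => k _; rewrite natrM mulrAC.
Qed.

Lemma colE_exp n (P : 'M[nat]_n) r m :
  exp_v (colE P r) m = colE P (fun k => (r k * m)%N).
Proof. by rewrite -!rowE_tr rowE_exp. Qed.

Lemma rowE0 n (P : 'M[nat]_n) : rowE P (fun _ => 0%N) = one_v n.
Proof.
rewrite E_one /rowE; congr E; apply: functional_extensionality => j.
by rewrite big1 // => k _; rewrite mul0r.
Qed.

Lemma gen_sub n (S : dset n) : subset_v S (gen_by S).
Proof. by move=> x Sx K _ SK; apply: SK. Qed.

Lemma gen_min n (S K : dset n) : is_group K -> subset_v S K -> subset_v (gen_by S) K.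
Proof. by move=> gK SK x /(_ K gK SK). Qed.

Lemma torus_group n : is_group (@torus n).
Proof.
split.
- by move=> j; rewrite ffunE oner_neq0.
- by move=> g h tg th j; rewrite ffunE mulf_neq0.
- by move=> g tg j; rewrite ffunE invr_eq0.
- by [].
Qed.

Lemma gen_group n (S : dset n) : subset_v S (@torus n) -> is_group (gen_by S).
Proof.
move=> St; split.
- by move=> K [] .
- by move=> g h hg hh K gK SK; case: (gK) => _ hM _ _; apply: hM; [apply: hg|apply: hh].
- by move=> g hg K gK SK; case: (gK) => _ _ hV _; apply: hV; apply: hg.
- by move=> g hg; apply: (hg _ (torus_group n) St).
Qed.

Lemma perp_group n (r : 'I_n -> nat) :
  is_group (fun h : dvec n => torus h /\ mono h r = 1).
Proof.
split.
- by split; [case: (torus_group n)|rewrite mono_one].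
- move=> g h [tg mg] [th mh]; split; last by rewrite mono_mul mg mh mulr1.
  by case: (torus_group n) => _ hM _ _; apply: hM.
- move=> g [tg mg]; split; last by rewrite mono_inv mg invr1.
  by case: (torus_group n) => _ _ hV _; apply: hV.
- by move=> g [].
Qed.

Lemma perp_gen n (S : dset n) r : subset_v S (@torus n) ->
  (forall h, S h -> mono h r = 1) -> forall h, gen_by S h -> mono h r = 1.
Proof.
move=> St Sr h hg.
have sub : subset_v S (fun h : dvec n => torus h /\ mono h r = 1).
  by move=> x Sx; split; [apply: St|apply: Sr].
by case: (gen_min (perp_group r) sub hg).
Qed.

Lemma BHdual_gen n (P : 'M[nat]_n) (S : dset n) : subset_v S (@torus n) ->
  eqset_v (BHdual P (gen_by S)) (BHdual P S).
Proof.
move=> St g; rewrite !BHdualE; split => -[r [hr ->]]; exists r; split => //.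
  by move=> h Sh; apply: hr; apply: gen_sub.
by move=> h; apply: perp_gen.
Qed.

Lemma BHdual_anti n (P : 'M[nat]_n) (A B : dset n) : subset_v A B ->
  subset_v (BHdual P B) (BHdual P A).
Proof.
move=> AB g; rewrite !BHdualE => -[r [hr ->]]; exists r; split => //.
by move=> h /AB; apply: hr.
Qed.

Lemma BHdual_eq n (P : 'M[nat]_n) (A B : dset n) : eqset_v A B ->
  eqset_v (BHdual P A) (BHdual P B).
Proof.
move=> AB g; split; apply: BHdual_anti => x; by case: (AB x).
Qed.

Lemma inv_unique n (x y : dvec n) : torus x -> mul_v x y = one_v n -> inv_v x = y.
Proof.
move=> tx e; apply/ffunP => j; have := congr1 (fun z : dvec n => z j) e.
rewrite !ffunE => e'; by rewrite -[y j](mulKf (tx j)) e' mulr1.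
Qed.

Lemma BHdual_group n (P : 'M[nat]_n) (X : dset n) : is_group (BHdual P X).
Proof.
have [dl dl0 hdl] := colE_root P.
split.
- apply/BHdualE; exists (fun _ => 0%N); split; last by rewrite rowE0.
  by move=> h _; rewrite /mono big1 // => k _; rewrite expr0.
- move=> g h /BHdualE [r1 [h1 ->]] /BHdualE [r2 [h2 ->]].
  apply/BHdualE; exists (fun k => (r1 k + r2 k)%N); split; last by rewrite rowE_mul.
  by move=> x Xx; rewrite mono_add h1 ?h2 ?mulr1.
- move=> g /BHdualE [r [hr ->]].
  apply/BHdualE; exists (fun k => (r k * dl.-1)%N); split.
    by move=> x Xx; rewrite mono_scale hr ?expr1n.
  apply: inv_unique; first exact: E_torus.
  rewrite rowE_mul.
  have -> : rowE P (fun k => (r k + (r k * dl.-1))%N) = exp_v (rowE P r) dl.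
    rewrite rowE_exp; congr rowE; apply: functional_extensionality => k.
    by rewrite -{1}(muln1 (r k)) -mulnDr add1n prednK.
  by apply/ffunP => j; rewrite [LHS]ffunE [RHS]ffunE; case: (hdl r j).
- by move=> g /BHdualE [r [_ ->]]; exact: E_torus.
Qed.

Lemma BHdual_Aut n (P : 'M[nat]_n) (X : dset n) : invertible_exp P ->
  subset_v (BHdual P X) (Aut P^T).
Proof. by move=> hP g /BHdualE [r [_ ->]]; apply: rowE_Aut. Qed.

Lemma DualDual n (P : 'M[nat]_n) (H : dset n) : invertible_exp P -> is_group H ->
  subset_v H (Aut P) -> eqset_v (BHdual P^T (BHdual P H)) H.
Proof.
move=> hP gH HA g; split.
  move=> /BHdualE [t [ht ->]]; rewrite rowE_tr.
  apply: NNPP => nH.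
  have [dl dl0 hdl] := Aut_root hP.
  have e2 : (2 * dl = (2 * dl - 2).+2)%N by lia.
  have hN : forall x, Aut P x -> forall j, x j ^+ (2 * dl - 2).+2 = 1.
    by move=> x Ax j; rewrite -e2 mulnC exprM hdl // expr1n.
  have [r [hr hne]] := Sep gH (fun x Hx => hN x (HA x Hx)) (hN _ (colE_Aut hP t)) nH.
  have : mono (rowE P r) t = 1.
    by apply: ht; apply/BHdualE; exists r; split.
  by rewrite -pairing => e; move: hne; rewrite -/(mono _ _) e eqxx.
move=> Hg; have [t et] := Aut_colE hP (HA g Hg).
apply/BHdualE; exists t; split; last by rewrite rowE_tr.
move=> y /BHdualE [r [hr ->]]; rewrite -pairing -et.
exact: hr.
Qed.

Definition ones n : 'I_n -> nat := fun _ => 1%N.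
Definition twos n : 'I_n -> nat := fun _ => 2%N.

Lemma mono1 n (h : dvec n) : mono h (@ones n) = \prod_j h j.
Proof. by apply: eq_bigr => j _; rewrite expr1. Qed.

Lemma mono2 n (h : dvec n) : mono h (@twos n) = mono h (@ones n) ^+ 2.
Proof. exact: (mono_scale h (@ones n) 2). Qed.

Lemma mono_exp n (x : dvec n) r m : mono (exp_v x m) r = mono x r ^+ m.
Proof.
rewrite /mono -prodrXl; apply: eq_bigr => k _; by rewrite ffunE exprAC.
Qed.

Lemma Aut_group n (P : 'M[nat]_n) : invertible_exp P -> is_group (Aut P).
Proof.
move=> hP; split.
- by move=> i; rewrite big1 // => j _; rewrite ffunE expr1n.
- move=> g h hg hh i.
  transitivity (\prod_j g j ^+ P i j * \prod_j h j ^+ P i j); last by rewrite hg hh mulr1.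
  by rewrite -big_split; apply: eq_bigr => j _; rewrite ffunE exprMn.
- move=> g hg i.
  transitivity ((\prod_j g j ^+ P i j)^-1); last by rewrite hg invr1.
  by rewrite -prodfV; apply: eq_bigr => j _; rewrite ffunE exprVn.
- exact: Aut_nz.
Qed.

Lemma J_col n (P : 'M[nat]_n) w d : invertible_exp P -> quasi_hom P w d ->
  J w d = colE P (@ones n).
Proof.
move=> hP [d0 [w0 hw]]; apply/ffunP => j; rewrite !ffunE; congr expi.
rewrite -(inv_apply hP (fun l => (w l)%:R / d%:R)); apply: eq_bigr => k _.
rewrite [RHS]mulrC; congr (_ * _).
under eq_bigr => l _ do rewrite mulrA -natrM.
by rewrite -mulr_suml -natr_sum hw divff // pnatr_eq0 -lt0n.
Qed.

Lemma expi_half : expi (1 / 2%:R) = -1.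
Proof.
have := @expiE 1 2 isT; rewrite -[(1%:~R : rat)]/(1 : rat) => ->.
by rewrite mulr1 -exprnP omX.
Qed.

Lemma detJ n w d : (0 < d)%N -> (2 * \sum_(j < n) w j = d)%N -> mono (@J n w d) (@ones n) = -1.
Proof.
move=> d0 h; rewrite mono1.
have -> : \prod_j J w d j = expi (\sum_j (w j)%:R / d%:R).
  by rewrite expi_sum; apply: eq_bigr => j _; rewrite ffunE.
rewrite -mulr_suml -natr_sum -h natrM.
rewrite -expi_half; congr expi.
have s0 : (\sum_(j < n) w j)%:R != 0 :> rat.
  by rewrite pnatr_eq0 -lt0n; move: d0; rewrite -h; lia.
by rewrite invfM mulrCA mulfV // mulr1 div1r.
Qed.

Lemma part1 n (M : 'M[nat]_n) w d w' d' : invertible_exp M -> quasi_hom M w d ->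
  (2 * \sum_(j < n) w j = d)%N -> quasi_hom M^T w' d' ->
  forall G, admissible M w d G -> admissible M^T w' d' (star M w d G).
Proof.
move=> hM hq h2 hq' G [gG GSL GJ2].
have eJ := J_col hM hq.
have eJp : J w' d' = rowE M (@ones n) by rewrite (J_col (inv_tr hM) hq') colE_tr.
have dJ : mono (J w d) (@ones n) = -1 by apply: detJ => //; case: hq.
pose S := fun x => G x \/ x = J w d.
have St : subset_v S (@torus n).
  move=> x [Gx| ->]; last by rewrite eJ; exact: E_torus.
  by case: gG => _ _ _ nz; apply: nz.
have eq := BHdual_gen M St.
split.
- exact: BHdual_group.
- move=> g /eq /BHdualE [r [hr ->]]; split; first exact: rowE_Aut.
  by rewrite -mono1 -pairing -eJ; apply: hr; right.
- apply/eq/BHdualE; exists (@twos n); split.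
    move=> x [Gx| ->]; last by rewrite mono2 dJ sqrrN expr1n.
    by rewrite mono2 mono1 (GSL x Gx).2 expr1n.
  by rewrite eJp rowE_exp.
Qed.

Lemma part3 n (M : 'M[nat]_n) w d : invertible_exp M -> quasi_hom M w d ->
  (2 * \sum_(j < n) w j = d)%N ->
  eqset_v (star M w d (gen_by (fun x => x = exp_v (J w d) 2))) (SL M^T).
Proof.
move=> hM hq h2.
have eJ := J_col hM hq.
pose S3 := fun x => gen_by (fun x => x = exp_v (J w d) 2) x \/ x = J w d.
have J2t : subset_v (fun x => x = exp_v (J w d) 2) (@torus n).
  by move=> x ->; rewrite eJ /colE E_exp; exact: E_torus.
have St3 : subset_v S3 (@torus n).
  move=> x [gx| ->]; last by rewrite eJ; exact: E_torus.
  exact: (gen_min (torus_group n) J2t gx).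
move=> g; rewrite /star (BHdual_gen M St3 g) BHdualE; split.
  move=> [r [hr ->]]; split; first exact: rowE_Aut.
  by rewrite -mono1 -pairing -eJ; apply: hr; right.
move=> [Ag detg]; have [r er] := Aut_rowE hM Ag.
exists r; split => //.
have rJ : mono (J w d) r = 1 by rewrite eJ pairing mono1 -er.
move=> x [gx| ->] //.
apply: (perp_gen J2t _ gx) => y ->.
by rewrite mono_exp rJ expr1n.
Qed.

Lemma part4 n (M : 'M[nat]_n) w d w' d' : invertible_exp M -> quasi_hom M w d ->
  (2 * \sum_(j < n) w j = d)%N -> quasi_hom M^T w' d' ->
  eqset_v (star M w d (SL M)) (gen_by (fun x => x = exp_v (J w' d') 2)).
Proof.
move=> hM hq h2 hq'.
have hMT := inv_tr hM.
have eJ := J_col hM hq.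
have eJp : J w' d' = rowE M (@ones n) by rewrite (J_col (inv_tr hM) hq') colE_tr.
have dJ : mono (J w d) (@ones n) = -1 by apply: detJ => //; case: hq.
have tJ : torus (J w d) by rewrite eJ; exact: E_torus.
have AJ : Aut M (J w d) by rewrite eJ; exact: colE_Aut.
set X := gen_by _.
have eJp2 : exp_v (J w' d') 2 = rowE M (@twos n) by rewrite eJp rowE_exp.
have Xt : subset_v (fun x => x = exp_v (J w' d') 2) (@torus n).
  by move=> x ->; rewrite eJp2; exact: E_torus.
have gX : is_group X := gen_group Xt.
have XA : subset_v X (Aut M^T).
  by apply: gen_min; [exact: Aut_group | move=> x ->; rewrite eJp2; exact: rowE_Aut].
pose D2 := fun h => Aut M h /\ mono h (@ones n) ^+ 2 = 1.
have C1 : eqset_v (BHdual M^T X) D2.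
  move=> h; rewrite BHdualE; split.
    move=> [t [ht ->]]; rewrite rowE_tr; split; first exact: colE_Aut.
    by rewrite -mono2 pairing -eJp2; apply: ht; apply: gen_sub.
  move=> [Ah dh]; have [t et] := Aut_colE hM Ah.
  exists t; split; last by rewrite rowE_tr.
  move=> x Xx; apply: (perp_gen Xt _ Xx) => y ->.
  by rewrite eJp2 -pairing -et mono2.
pose KS := fun x => SL M x \/ x = J w d.
have KSt : subset_v KS (@torus n).
  move=> x [[Ax _]| ->] //; exact: Aut_nz hM _ Ax.
have gK := gen_group KSt.
have gD2 : is_group D2.
  have [A1 AM AV Anz] := Aut_group hM.
  split.
  - by split; [exact: A1 | rewrite mono_one expr1n].
  - by move=> g h [Ag dg] [Ah dh]; split; [exact: AM | rewrite mono_mul exprMn dg dh mulr1].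
  - by move=> g [Ag dg]; split; [exact: AV | rewrite mono_inv exprVn dg invr1].
  - by move=> g [Ag _]; exact: Anz.
have C2 : eqset_v (gen_by KS) D2.
  move=> h; split.
    apply: gen_min => // x [[Ax dx]| ->].
      by split => //; rewrite mono1 dx expr1n.
    by split => //; rewrite dJ sqrrN expr1n.
  move=> [Ah dh]; have /eqP := dh; rewrite sqrf_eq1.
  case/orP => /eqP e.
    by apply: gen_sub; left; split => //; rewrite -mono1.
  have [g1 gM gV gnz] := gK.
  have [A1 AM AV Anz] := Aut_group hM.
  pose y := mul_v h (inv_v (J w d)).
  have Ky : gen_by KS y.
    apply: gen_sub; left; split; first by apply: AM => //; exact: AV.
    by rewrite -mono1 mono_mul mono_inv e dJ invrN invr1 mulrNN mulr1.
  have -> : h = mul_v y (J w d).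
    by apply/ffunP => j; rewrite !ffunE mulfVK // expi_neq0.
  by apply: (gM) => //; apply: gen_sub; right.
move=> g; rewrite /star.
rewrite (BHdual_eq M C2 g).
have C1' : eqset_v D2 (BHdual M^T X) by move=> x; split => /C1.
rewrite (BHdual_eq M C1' g).
have := DualDual hMT gX XA g; rewrite trmxK => ->.
by [].
Qed.

Lemma part2 n (M : 'M[nat]_n) w d w' d' : invertible_exp M -> quasi_hom M w d ->
  (2 * \sum_(j < n) w j = d)%N -> quasi_hom M^T w' d' ->
  forall G, admissible M w d G -> eqset_v (star M^T w' d' (star M w d G)) G.
Proof.
move=> hM hq h2 hq' G [gG GSL GJ2].
have eJ := J_col hM hq.
have eJp : J w' d' = rowE M (@ones n) by rewrite (J_col (inv_tr hM) hq') colE_tr.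
have dJ : mono (J w d) (@ones n) = -1 by apply: detJ => //; case: hq.
have tJ : torus (J w d) by rewrite eJ; exact: E_torus.
have AJ : Aut M (J w d) by rewrite eJ; exact: colE_Aut.
have [g1 gM gV gnz] := gG.
pose S := fun x => G x \/ x = J w d.
have St : subset_v S (@torus n) by move=> x [Gx| ->] //; exact: gnz.
have gKG := gen_group St.
have KGA : subset_v (gen_by S) (Aut M).
  apply: gen_min; first exact: Aut_group.
  by move=> x [Gx| ->] //; case: (GSL x Gx).
have DD := DualDual hM gKG KGA.
set Y := star M w d G.
have Yt : subset_v (fun x => Y x \/ x = J w' d') (@torus n).
  move=> x [Yx| ->]; last by rewrite eJp; exact: E_torus.
  by case: (BHdual_group M (gen_by S)) => _ _ _ nz; apply: nz.
move=> h; rewrite /star (BHdual_gen M^T Yt h) BHdualE; split.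
  move=> [t [ht ->]]; rewrite rowE_tr.
  have hK : gen_by S (colE M t).
    apply/DD/BHdualE; exists t; split; last by rewrite rowE_tr.
    by move=> y Yy; apply: ht; left.
  have dh : mono (colE M t) (@ones n) = 1 by rewrite pairing -eJp; apply: ht; right.
  pose Z := fun x => G x \/ G (mul_v x (inv_v (J w d))).
  have tJV : torus (inv_v (J w d)) by move=> j; rewrite ffunE invr_eq0.
  have gZ : is_group Z.
    split.
    - by left.
    - move=> x y [Gx|Gx] [Gy|Gy].
      + by left; apply: (gM).
      + right; have -> : mul_v (mul_v x y) (inv_v (J w d)) = mul_v x (mul_v y (inv_v (J w d))).
          by apply/ffunP => j; rewrite !ffunE mulrA.
        by apply: (gM).
      + right; have -> : mul_v (mul_v x y) (inv_v (J w d)) = mul_v (mul_v x (inv_v (J w d))) y.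
          by apply/ffunP => j; rewrite !ffunE mulrAC.
        by apply: (gM).
      + left; have -> : mul_v x y = mul_v (mul_v (mul_v x (inv_v (J w d))) (mul_v y (inv_v (J w d)))) (exp_v (J w d) 2).
          apply/ffunP => j; rewrite !ffunE; have := tJ j; rewrite ffunE => tj.
          by field.
        by apply: (gM) => //; apply: (gM).
    - move=> x [Gx|Gx]; first by left; apply: (gV).
      right; have -> : mul_v (inv_v x) (inv_v (J w d)) = mul_v (inv_v (mul_v x (inv_v (J w d)))) (inv_v (exp_v (J w d) 2)).
        apply/ffunP => j; rewrite !ffunE; have := tJ j; rewrite ffunE => tj.
        have := gnz _ Gx j; rewrite !ffunE mulf_eq0 negb_or => /andP[xj _].
        by rewrite invfM invrK expr2 invfM mulrA mulfK.
      by apply: (gM); apply: (gV).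
    - move=> x [Gx|Gx] j; first exact: gnz.
      have := gnz _ Gx j; rewrite ffunE; apply: contra => /eqP ->; by rewrite mul0r.
  have SZ : subset_v S Z.
    move=> x [Gx| ->]; first by left.
    right; have -> : mul_v (J w d) (inv_v (J w d)) = one_v n.
      apply/ffunP => j; rewrite !ffunE; have := tJ j; rewrite ffunE => tj.
      by rewrite mulfV.
    exact: g1.
  case: (gen_min gZ SZ hK) => // Gx.
  have := (GSL _ Gx).2; rewrite -mono1 mono_mul mono_inv dh dJ invrN invr1 mul1r.
  by move/eqP; rewrite (negbTE neqN11).
move=> Gh; have /DD /BHdualE [t [ht e]] : gen_by S h by apply: gen_sub; left.
rewrite rowE_tr in e.
exists t; split; last by rewrite rowE_tr.
move=> x [Yx| ->]; first exact: ht.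
by rewrite eJp -pairing -e mono1; exact: (GSL h Gh).2.
Qed.

Lemma part5 n (M : 'M[nat]_n) w d :
  forall H1 H2, admissible M w d H1 -> admissible M w d H2 ->
    subset_v H1 H2 -> subset_v (star M w d H2) (star M w d H1).
Proof.
move=> H1 H2 _ _ H12; apply: BHdual_anti => x gx K gK SK.
by apply: gx => // y [Hy| ->]; apply: SK; [left; apply: H12 | right].
Qed.

Unset Implicit Arguments.
Set Strict Implicit.

Theorem proposition4p3 (n : nat) (M : 'M[nat]_n)
  (w : 'I_n -> nat) (d : nat) (w' : 'I_n -> nat) (d' : nat) :
  invertible_exp M ->
  quasi_hom M w d ->
  non_degenerate M ->
  (2 * \sum_(j < n) w j = d)%N ->
  (* w', d' : weights and degree of the transpose W^* (exponent matrix M^T) *)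
  quasi_hom M^T w' d' ->
  [/\ (forall G, admissible M w d G -> admissible M^T w' d' (star M w d G)),
      (forall G, admissible M w d G ->
         eqset_v (star M^T w' d' (star M w d G)) G),
      eqset_v (star M w d (gen_by (fun x => x = exp_v (J w d) 2))) (SL M^T),
      eqset_v (star M w d (SL M)) (gen_by (fun x => x = exp_v (J w' d') 2)) &
      (forall H1 H2, admissible M w d H1 -> admissible M w d H2 ->
         subset_v H1 H2 -> subset_v (star M w d H2) (star M w d H1))].
Proof.
move=> hM hq _ h2 hq'; split.
- exact: part1.
- exact: part2.
- exact: part3.
- exact: part4.
- exact: part5.
Qed.
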